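(* With $N$, $v$, $e_\ell$ and $e$ as in the context, for every line $\ell$ of $\mathrm{PG}_2(q)$ we have $Ne_\ell=q^2v\,e$.
   Context: $q$ is a prime power, $G=\mathrm{PGL}_3(q)$ acts on the point set $\mathcal{P}$ of $\mathrm{PG}_2(q)$ (the $1$-dimensional subspaces of $\mathrm{GF}(q)^3$); lines are $2$-dimensional subspaces, viewed as sets of points. $V$ is the complex vector space with basis $\{e_{\alpha\beta}:(\alpha,\beta)\in\mathcal{P}^2\}$, and $N$ is the linear operator on $V$ with matrix entries $N_{(\alpha,\beta),(\gamma,\delta)}=|\{g\in G:\alpha^g=\beta,\ \gamma^g=\delta,\ g\text{ fixes no point of }\mathcal{P}\}|$. $v=(q-1)q(q^2-1)/3$. $e_\ell=\sum_{\beta,\beta'\in\ell}e_{\beta\beta'}$ and $e=\sum_{\beta,\beta'\in\mathcal{P},\ \beta\neq\beta'}e_{\beta\beta'}$. *)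

(* Defs.v *)
From HB Require Import structures.
From mathcomp Require Import all_boot all_order all_algebra.
Set Implicit Arguments. Unset Strict Implicit. Unset Printing Implicit Defensive.
Import GRing.Theory.
Local Open Scope ring_scope.

Section PG2.
Variable F : finFieldType.

(* vectors of GF(q)^3 are row vectors; matrices act on the right *)
Definition vec := 'rV[F]_3.

Definition pt (v : vec) : {set vec} := [set c *: v | c : F].

Definition Pts : {set {set vec}} := [set pt v | v : vec & v != 0].

Definition span2 (u w : vec) : {set vec} := [set a *: u + b *: w | a : F, b : F].

Definition line (u w : vec) : {set {set vec}} :=
  [set p in Pts | p \subset span2 u w].

Definition Lines : {set {set {set vec}}} :=
  [set L | [exists u : vec, exists w : vec,
            (\rank (col_mx u w) == 2%N) && (L == line u w)]].

Definition img (A : 'M[F]_3) (S : {set vec}) : {set vec} := [set x *m A | x in S].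

(* the permutation of the points induced by A (identity off the points) *)
Definition gmap (A : 'M[F]_3) : {ffun {set vec} -> {set vec}} :=
  [ffun S => if S \in Pts then img A S else S].

(* PGL_3(F), realised (faithfully) as the group of maps of points induced by GL_3(F) *)
Definition PGL3 : {set {ffun {set vec} -> {set vec}}} := [set gmap A | A in unitmx].

Definition fpf (g : {ffun {set vec} -> {set vec}}) : bool :=
  [forall p in Pts, g p != p].

Definition Nmat (a b c d : {set vec}) : nat :=
  #|[set g in PGL3 | [&& g a == b, g c == d & fpf g]]|.

End PG2.

(* v = (q-1) q (q^2-1) / 3  (exact division) *)
Definition vnum (q : nat) : nat := ((q - 1) * q * (q ^ 2 - 1)) %/ 3.

(* Main.v *)
Require Import Defs.
From HB Require Import structures.
From mathcomp Require Import all_boot all_order all_algebra.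
From mathcomp Require Import ring zify.
Set Implicit Arguments. Unset Strict Implicit. Unset Printing Implicit Defensive.

Module Aux.
Import GRing.Theory.
Local Open Scope ring_scope.

Section Gen.
Variable T : finType.

Lemma sum_in (A : {set T}) : (\sum_x ((x \in A) : nat) = #|A|)%N.
Proof.
rewrite -sum1_card [RHS]big_mkcond /=; apply: eq_bigr => x _; by case: (x \in A).
Qed.

Lemma sum_pred (P : pred T) : (\sum_x (P x : nat) = #|[set x | P x]|)%N.
Proof. rewrite -sum_in; apply: eq_bigr => x _; by rewrite inE. Qed.

Lemma sum2_distinct (A : {set T}) :
  (\sum_x \sum_y (((x \in A) && (y \in A) && (x != y)) : nat) = #|A| * (#|A| - 1))%N.
Proof.
transitivity (\sum_x ((x \in A) : nat) * (#|A| - 1))%N; last by rewrite -big_distrl /= sum_in.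
apply: eq_bigr => x _.
case xA: (x \in A) => /=; last by rewrite big1.
rewrite (cardsD1 x A) xA add1n subSS subn0 mul1n -sum_in; apply: eq_bigr => y _.
by rewrite !inE andbC eq_sym.
Qed.

Lemma sum3_distinct (A : {set T}) :
  (\sum_x \sum_y \sum_z (((x \in A) && (y \in A) && (z \in A) && (x != y) && (x != z) && (y != z)) : nat)
   = #|A| * (#|A| - 1) * (#|A| - 2))%N.
Proof.
transitivity (\sum_x ((x \in A) : nat) * ((#|A| - 1) * (#|A| - 2)))%N;
  last by rewrite -big_distrl /= sum_in mulnA.
apply: eq_bigr => x _.
case xA: (x \in A) => /=; last by rewrite big1 // => y _; rewrite big1.
rewrite mul1n.
have -> : (#|A| - 1 = #|A :\ x|)%N by rewrite (cardsD1 x A) xA add1n subSS subn0.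
have -> : (#|A| - 2 = #|A :\ x| - 1)%N by rewrite (cardsD1 x A) xA add1n subSS.
rewrite -sum2_distinct; apply: eq_bigr => y _; apply: eq_bigr => z _.
rewrite !inE.
rewrite ![x == _]eq_sym.
by case: (y == x); case: (z == x); case: (y \in A); case: (z \in A).

Qed.

End Gen.

Section Cub.
Variable F : finFieldType.
Local Notation q := #|F|.

Definition cub (t : F * F * F) (x : F) : F := x ^+ 3 - t.1.1 * x ^+ 2 - t.1.2 * x - t.2.
Definition rt t x := cub t x == 0.

Lemma sum3 (f : F * F * F -> nat) :
  (\sum_t f t = \sum_a \sum_b \sum_c f (a, b, c))%N.
Proof.
transitivity (\sum_(p : F * F * F) f (p.1, p.2))%N; first by apply: eq_bigr => -[].
rewrite -(pair_big predT predT (fun p c => f (p, c))) /=.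
transitivity (\sum_(p : F * F) (fun p => \sum_c f (p, c)) (p.1, p.2))%N; first by apply: eq_bigr => -[].
by rewrite -(pair_big predT predT (fun a b => \sum_c f (a, b, c))%N).
Qed.

Lemma sum_eq1 (e : F) : (\sum_(c : F) ((c == e) : nat) = 1)%N.
Proof. by rewrite (bigD1 e) //= eqxx big1 // => x /negbTE ->. Qed.

Lemma sum_andeq (P : bool) (e : F) : (\sum_(c : F) ((P && (c == e)) : nat) = P)%N.
Proof. by case: P => /=; [rewrite sum_eq1 | rewrite big1]. Qed.

Lemma rt1 a b c x : rt (a, b, c) x = (c == x ^+ 3 - a * x ^+ 2 - b * x).
Proof. by rewrite /rt /cub /= subr_eq0 eq_sym. Qed.

Lemma rt2 a b c x y : x != y ->
  rt (a, b, c) x && rt (a, b, c) y =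
  (b == x ^+ 2 + x * y + y ^+ 2 - a * (x + y)) && (c == x ^+ 3 - a * x ^+ 2 - b * x).
Proof.
move=> nxy; rewrite !rt1; apply/andP/andP => -[/eqP h1 /eqP h2]; split; apply/eqP.
- have : (x - y) * (x ^+ 2 + x * y + y ^+ 2 - a * (x + y) - b) = 0.
    by rewrite -[RHS](subrr c) {1}h1 h2; ring.
  by move/eqP; rewrite mulf_eq0 subr_eq0 (negbTE nxy) /= subr_eq0 => /eqP.
- by [].
- by [].
- by rewrite h2 h1; ring.
Qed.

Lemma rt3 a b c x y z : x != y -> x != z -> y != z ->
  rt (a, b, c) x && rt (a, b, c) y && rt (a, b, c) z =
  [&& a == x + y + z, b == x ^+ 2 + x * y + y ^+ 2 - a * (x + y) &
      c == x ^+ 3 - a * x ^+ 2 - b * x].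
Proof.
move=> nxy nxz nyz.
have -> : rt (a, b, c) x && rt (a, b, c) y && rt (a, b, c) z =
  (rt (a, b, c) x && rt (a, b, c) y) && (rt (a, b, c) x && rt (a, b, c) z).
  by case: (rt _ x); case: (rt _ y).
rewrite (rt2 _ _ _ nxy) (rt2 _ _ _ nxz).
apply/idP/idP.
- case/andP => /andP [/eqP hb /eqP hc] /andP [/eqP hb2 _].
  rewrite hc eqxx hb eqxx !andbT.
  have : (y - z) * (x + y + z - a) = 0.
    have e : (y - z) * (x + y + z - a) = (x ^+ 2 + x * y + y ^+ 2 - a * (x + y))
       - (x ^+ 2 + x * z + z ^+ 2 - a * (x + z)) by ring.
    by rewrite e -hb -hb2 subrr.
  by move/eqP; rewrite mulf_eq0 subr_eq0 (negbTE nyz) /= subr_eq0 eq_sym.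
- case/and3P => /eqP ha /eqP hb /eqP hc.
  rewrite hc; subst b; rewrite !eqxx /= andbT; apply/eqP; rewrite ha; ring.
Qed.

End Cub.

Section Cub2.
Variable F : finFieldType.
Local Notation q := #|F|.

Lemma sumc (n : nat) : (\sum_(x : F) n = q * n)%N.
Proof. by rewrite big_const iter_addn_0 mulnC. Qed.

Lemma C1 x : (\sum_(t : F * F * F) (rt t x : nat) = q * q)%N.
Proof.
rewrite sum3 -sumc; apply: eq_bigr => a _; rewrite -[RHS]muln1 -sumc; apply: eq_bigr => b _.
rewrite -(sum_eq1 (x ^+ 3 - a * x ^+ 2 - b * x)); apply: eq_bigr => c _.
by rewrite rt1.
Qed.

Lemma C2 x y : (\sum_(t : F * F * F) ((rt t x && rt t y && (x != y)) : nat) = (x != y) * q)%N.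
Proof.
case: (eqVneq x y) => [->|nxy] /=; first by rewrite big1 // => t _; rewrite andbF.
rewrite mul1n sum3 -[RHS]muln1 -sumc; apply: eq_bigr => a _.
rewrite (bigD1 (x ^+ 2 + x * y + y ^+ 2 - a * (x + y))) //= [X in (_ + X)%N]big1 ?addn0.
  rewrite -[RHS](sum_eq1 (x ^+ 3 - a * x ^+ 2 - (x ^+ 2 + x * y + y ^+ 2 - a * (x + y)) * x)).
  by apply: eq_bigr => c _; rewrite andbT rt2 // eqxx.
move=> b nb; rewrite big1 // => c _; rewrite andbT rt2 //.
by rewrite (negbTE nb).
Qed.

Lemma C3 x y z : (\sum_(t : F * F * F)
   ((rt t x && rt t y && rt t z && (x != y) && (x != z) && (y != z)) : nat)
   = ((x != y) && (x != z) && (y != z) : nat))%N.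
Proof.
case: (eqVneq x y) => [->|nxy] /=; first by rewrite big1 // => t _; rewrite !andbF.
case: (eqVneq x z) => [->|nxz] /=; first by rewrite big1 // => t _; rewrite !andbF.
case: (eqVneq y z) => [->|nyz] /=; first by rewrite big1 // => t _; rewrite !andbF.
rewrite sum3 (bigD1 (x + y + z)) //= [X in (_ + X)%N]big1 ?addn0.
  rewrite (bigD1 (x ^+ 2 + x * y + y ^+ 2 - (x + y + z) * (x + y))) //= [X in (_ + X)%N]big1 ?addn0.
    rewrite -[RHS](sum_eq1 (x ^+ 3 - (x + y + z) * x ^+ 2
               - (x ^+ 2 + x * y + y ^+ 2 - (x + y + z) * (x + y)) * x)).
    by apply: eq_bigr => c _; rewrite !andbT rt3 // !eqxx.
  move=> b nb; rewrite big1 // => c _; rewrite !andbT rt3 //.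
  by rewrite (negbTE nb) andbF.
move=> a na; rewrite big1 // => b _; rewrite big1 // => c _; rewrite !andbT rt3 //.
by rewrite (negbTE na).
Qed.

End Cub2.

Lemma four (T : finType) (A : {set T}) : (3 < #|A|)%N -> exists x y z w,
  [/\ x \in A, y \in A, z \in A, w \in A &
      [&& x != y, x != z, x != w, y != z, y != w & z != w]].
Proof.
move=> h.
have [x xA] : exists x, x \in A by apply/card_gt0P; lia.
have h1 : (2 < #|A :\ x|)%N by move: h; rewrite (cardsD1 x A) xA; lia.
have [y] : exists y, y \in A :\ x by apply/card_gt0P; lia.
move=> yA1; have h2 : (1 < #|A :\ x :\ y|)%N by move: h1; rewrite (cardsD1 y (A :\ x)) yA1; lia.
have [z] : exists z, z \in A :\ x :\ y by apply/card_gt0P; lia.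
move=> zA2; have h3 : (0 < #|A :\ x :\ y :\ z|)%N by move: h2; rewrite (cardsD1 z (A :\ x :\ y)) zA2; lia.
have [w] : exists w, w \in A :\ x :\ y :\ z by apply/card_gt0P; lia.
move=> wA3; move: yA1 zA2 wA3; rewrite !inE.
move=> /andP [nyx yA] /and3P [nzy nzx zA] /and4P [nwz nwy nwx wA].
exists x, y, z, w; split=> //.
by rewrite (eq_sym x y) nyx (eq_sym x z) nzx (eq_sym x w) nwx (eq_sym y z) nzy (eq_sym y w) nwy (eq_sym z w) nwz.
Qed.

Lemma sum_lin (I : finType) (a b c : I -> nat) :
  (\sum_i (6 * a i + 6 * b i + c i) = 6 * \sum_i a i + 6 * \sum_i b i + \sum_i c i)%N.
Proof. by rewrite !big_distrr -!big_split. Qed.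

Lemma sum_lin2 (I : finType) (a : I -> nat) :
  (\sum_i (6 + 3 * a i) = \sum_(i : I) 6 + 3 * \sum_i a i)%N.
Proof. by rewrite !big_distrr -!big_split. Qed.

Section Cub3.
Variable F : finFieldType.
Local Notation q := #|F|.

Definition Zr (t : F * F * F) := #|[set x | rt t x]|.

Lemma Zle3 t : (Zr t <= 3)%N.
Proof.
rewrite leqNgt; apply/negP => /four [x [y [z [w [xA yA zA wA]]]]].
case/and5P => nxy nxz nxw nyz /andP [nyw nzw].
move: xA yA zA wA; rewrite !inE; case: t => [[a b] c] hx hy hz hw.
have := rt3 a b c nxy nxz nyz; rewrite hx hy hz /= => /esym /and3P [/eqP ha _ _].
have := rt3 a b c nxy nxw nyw; rewrite hx hy hw /= => /esym /and3P [/eqP ha2 _ _].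
move: nzw; rewrite ha in ha2; move: ha2 => /addrI ->.
by rewrite eqxx.
Qed.

Definition rootless (t : F * F * F) := [forall x, ~~ rt t x].

Lemma Rcount : (3 * #|[set t | rootless t]| = q ^ 3 - q)%N.
Proof.
have key : (\sum_t (6 * (Zr t == 0) + 6 * Zr t + Zr t * (Zr t - 1) * (Zr t - 2))
           = \sum_(t : F * F * F) (6 + 3 * (Zr t * (Zr t - 1))))%N.
  apply: eq_bigr => t _; have := Zle3 t.
  by case: (Zr t) => [|[|[|[|n]]]].
rewrite sum_lin sum_lin2 in key.
have e0 : (\sum_(t : F * F * F) (Zr t == 0) = #|[set t | rootless t]|)%N.
  rewrite sum_pred; apply: eq_card => t; rewrite !inE /Zr cards_eq0.
  apply/idP/idP.
    move/eqP => h; apply/forallP => x; apply/negP => hx.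
    have : x \in [set x | rt t x] by rewrite inE.
    by rewrite h inE.
  move/forallP => h; apply/eqP/setP => x; rewrite !inE; exact/negbTE/h.
have e1 : (\sum_(t : F * F * F) Zr t = q * (q * q))%N.
  rewrite /Zr; under eq_bigr do rewrite -sum_pred.
  by rewrite exchange_big /= -sumc; apply: eq_bigr => x _; rewrite C1.
have e2 : (\sum_(t : F * F * F) (Zr t * (Zr t - 1)) = q * (q * (q - 1)))%N.
  rewrite /Zr; under eq_bigr do rewrite -sum2_distinct.
  rewrite exchange_big /=.
  have -> : q = #|[set: F]| by rewrite cardsT.
  rewrite -sum2_distinct big_distrr /=; apply: eq_bigr => x _.
  rewrite exchange_big big_distrr /=; apply: eq_bigr => y _.
  rewrite !inE /= cardsT mulnC -C2; apply: eq_bigr => t _; by rewrite !inE.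
have e3 : (\sum_(t : F * F * F) (Zr t * (Zr t - 1) * (Zr t - 2)) = q * (q - 1) * (q - 2))%N.
  rewrite /Zr; under eq_bigr do rewrite -sum3_distinct.
  have -> : q = #|[set: F]| by rewrite cardsT.
  rewrite -sum3_distinct exchange_big; apply: eq_bigr => x _.
  rewrite exchange_big; apply: eq_bigr => y _.
  rewrite exchange_big; apply: eq_bigr => z _.
  rewrite !inE /= -C3; apply: eq_bigr => t _; by rewrite !inE.
have c6 : (\sum_(t : F * F * F) 6 = q * (q * (q * 6)))%N.
  rewrite sum3 -sumc; apply: eq_bigr => a _; rewrite -sumc; apply: eq_bigr => b _; by rewrite sumc.
rewrite e0 e1 e2 e3 c6 in key.
move: key; set R := #|_|.
rewrite expnS expnS expn1 => key.
move: key; generalize #|F| => n; case: n => [|[|k]] key; [lia | lia | ].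
have e1k : (k.+2 - 1 = k.+1)%N by lia.
have e2k : (k.+2 - 2 = k)%N by lia.
rewrite e1k e2k in key.
have h : (k.+2 * (k.+2 * k.+2) = k.+2 * k.+1 * k.+3 + k.+2)%N by nia.
rewrite h addnK. nia.
Qed.

End Cub3.

Lemma det3 (R : comNzRingType) (A : 'M[R]_3) : \det A =
  A 0 0 * (A 1 1 * A 2 2 - A 1 2 * A 2 1)
  - A 0 1 * (A 1 0 * A 2 2 - A 1 2 * A 2 0)
  + A 0 2 * (A 1 0 * A 2 1 - A 1 1 * A 2 0).
Proof.
have det2 (B : 'M[R]_2) : \det B = B 0 0 * B 1 1 - B 0 1 * B 1 0.
  rewrite (expand_det_row _ 0) !big_ord_recl big_ord0 /cofactor !det_mx11 !mxE /=.
  pose C := fun k l : nat => B (inord k) (inord l).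
  have Be : forall i j, B i j = C (val i) (val j) by move=> i j; rewrite /C !inord_val.
  by rewrite !Be /= /bump /=; ring.
rewrite (expand_det_row _ 0) !big_ord_recl big_ord0 /cofactor !det2 !mxE /=.
pose B := fun k l : nat => A (inord k) (inord l).
have Ae : forall i j, A i j = B (val i) (val j) by move=> i j; rewrite /B !inord_val.
by rewrite !Ae /= /bump /=; ring.
Qed.

Section C2.
Variable F : finFieldType.
Local Notation q := #|F|.

Definition eigfree (T : 'M[F]_3) := [forall l : F, \det (T - l%:M) != 0].

Definition Phi (w z : F * F * F) : 'M[F]_3 :=
  \matrix_(i < 3, j < 3) nth 0 (nth [::] [:: [:: 0; 1; 0]; [:: w.1.1; w.1.2; w.2];
                                        [:: z.1.1; z.1.2; z.2]] i) j.

Definition psi (w z : F * F * F) : F * F * F :=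
  ((w.1.2 + z.2, w.2 * z.1.2 + w.1.1 - w.1.2 * z.2), w.2 * z.1.1 - w.1.1 * z.2).

Lemma detPhi w z l : \det (Phi w z - l%:M) = - cub (psi w z) l.
Proof.
rewrite det3 !mxE /= /cub /psi /=; ring.
Qed.

Lemma eigfree_Phi w z : eigfree (Phi w z) = rootless (psi w z).
Proof.
apply/forallP/forallP => h l; move: (h l); by rewrite /rt detPhi oppr_eq0.
Qed.

Lemma psi_inj (w : F * F * F) : w.2 != 0 -> injective (psi w).
Proof.
move=> nw [[z0 z1] z2] [[z0' z1'] z2'] /= [e2 e1 e0].
have h2 : z2 = z2' by apply: (addrI w.1.2).
subst z2'.
have h1 : z1 = z1'.
  apply: (mulfI nw); move/eqP: e1; rewrite (inj_eq (addIr _)) (inj_eq (addIr _)).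
  by move/eqP.
have h0 : z0 = z0'.
  apply: (mulfI nw); move/eqP: e0; rewrite (inj_eq (addIr _)). by move/eqP.
by rewrite h1 h0.
Qed.

Lemma rootless_psi0 (w z : F * F * F) : w.2 = 0 -> rootless (psi w z) = false.
Proof.
move=> w2; apply/negbTE/forallPn; exists z.2; rewrite negbK /rt /cub /psi /= w2.
apply/eqP; ring.
Qed.

Lemma sum_rootless (w : F * F * F) :
  (\sum_z (rootless (psi w z) : nat) = (w.2 != 0%R) * #|[set t : F * F * F | rootless t]|)%N.
Proof.
case: (eqVneq w.2 (0 : F)) => [w2|nw] /=.
  by rewrite mul0n big1 // => z _; rewrite rootless_psi0.
by rewrite mul1n -sum_pred [RHS](reindex_inj (psi_inj nw)).
Qed.

Definition Phi2 (p : (F * F * F) * (F * F * F)) := Phi p.1 p.2.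

Lemma Phi2_inj : injective Phi2.
Proof.
move=> [[[w0 w1] w2] [[z0 z1] z2]] [[[w0' w1'] w2'] [[z0' z1'] z2']] e.
have E i j : Phi2 ((w0, w1, w2), (z0, z1, z2)) i j = Phi2 ((w0', w1', w2'), (z0', z1', z2')) i j
  by rewrite e.
move: (E 1 0) (E 1 1) (E 1 2) (E 2 0) (E 2 1) (E 2 2); rewrite !mxE /=.
by move=> -> -> -> -> -> ->.
Qed.

Lemma Phi_row0 w z : (delta_mx 0 0 : 'rV[F]_3) *m Phi w z = (delta_mx 0 1 : 'rV[F]_3).
Proof.
rewrite -rowE; apply/rowP => j; rewrite !mxE.
by case: j => [[|[|[|j]]] Hj].
Qed.

Lemma Phi_surj (T : 'M[F]_3) : (delta_mx 0 0 : 'rV[F]_3) *m T = (delta_mx 0 1 : 'rV[F]_3) ->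
  T = Phi (T 1 0, T 1 1, T 1 2) (T 2 0, T 2 1, T 2 2).
Proof.
move=> h.
have h0 j : T 0 j = (delta_mx 0 1 : 'rV[F]_3) 0 j by rewrite -h -rowE mxE.
pose B := fun k l : nat => T (inord k) (inord l).
have Te : forall i j, T i j = B (val i) (val j) by move=> i j; rewrite /B !inord_val.
apply/matrixP => i j; rewrite !mxE.
case: i => [[|[|[|i]]] Hi] //=.
- rewrite Te /=; have := h0 j; rewrite Te /= mxE.
  by case: j => [[|[|[|j]]] Hj] //= ->.
- by rewrite !Te /=; case: j => [[|[|[|j]]] Hj].
- by rewrite !Te /=; case: j => [[|[|[|j]]] Hj].
Qed.

Lemma S0count : #|[set T : 'M[F]_3 | ((delta_mx 0 0 : 'rV[F]_3) *m T == (delta_mx 0 1 : 'rV[F]_3)) && eigfree T]|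
  = (q * (q * (q - 1)) * #|[set t : F * F * F | rootless t]|)%N.
Proof.
have -> : [set T : 'M[F]_3 | ((delta_mx 0 0 : 'rV[F]_3) *m T == (delta_mx 0 1 : 'rV[F]_3)) && eigfree T]
   = Phi2 @: [set p | eigfree (Phi2 p)].
  apply/setP => T; rewrite inE; apply/idP/imsetP.
    case/andP => /eqP h hT; exists ((T 1 0, T 1 1, T 1 2), (T 2 0, T 2 1, T 2 2)).
      by rewrite inE /Phi2 /= -Phi_surj.
    by rewrite /Phi2 /= -Phi_surj.
  case=> p; rewrite inE => hp ->; by rewrite hp /Phi2 Phi_row0 eqxx.
rewrite (card_imset _ Phi2_inj) -sum_pred.
rewrite -(pair_big predT predT (fun w z => (eigfree (Phi2 (w, z)) : nat))) /=.
transitivity (\sum_(w : F * F * F) ((w.2 != 0%R) * #|[set t : F * F * F | rootless t]|))%N.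
  apply: eq_bigr => w _; rewrite -sum_rootless; apply: eq_bigr => z _.
  by rewrite /Phi2 eigfree_Phi.
rewrite -big_distrl /=; congr (_ * _)%N.
rewrite sum3 -sumc; apply: eq_bigr => a _; rewrite -sumc; apply: eq_bigr => b _.
rewrite sum_pred.
have -> : [set x : F | (a, b, x).2 != 0%R] = [set~ 0%R] by apply/setP => x; rewrite !inE.
by rewrite cardsC1 subn1.
Qed.

End C2.

Section G1.
Variable F : finFieldType.
Local Notation q := #|F|.
Local Notation vec := 'rV[F]_3.

Lemma ptP (v x : vec) : reflect (exists c, x = c *: v) (x \in pt v).
Proof.
apply: (iffP imsetP) => [[c _ ->]|[c ->]]; by exists c.
Qed.

Lemma pt_self (v : vec) : v \in pt v.
Proof. by apply/ptP; exists 1; rewrite scale1r. Qed.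

Lemma ptZ (c : F) (v : vec) : c != 0 -> pt (c *: v) = pt v.
Proof.
move=> nc; apply/setP => x; apply/ptP/ptP => -[d ->].
  by exists (d * c); rewrite scalerA.
by exists (d / c); rewrite scalerA mulfVK.
Qed.

Lemma pt_eq (u v : vec) : pt u = pt v -> exists c, u = c *: v.
Proof. by move=> e; apply/ptP; rewrite -e pt_self. Qed.

Lemma img_pt (A : 'M[F]_3) (v : vec) : img A (pt v) = pt (v *m A).
Proof.
apply/setP => x; apply/imsetP/ptP.
  by case=> y /ptP [c ->] ->; exists c; rewrite scalemxAl.
by case=> c ->; exists (c *: v); [apply/ptP; exists c | rewrite scalemxAl].
Qed.

Lemma PtsP (p : {set vec}) : reflect (exists2 v, v != 0 & p = pt v) (p \in Pts F).
Proof.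
apply: (iffP imsetP) => [[v]|[v nv ->]]; first by rewrite inE => nv ->; exists v.
by exists v; rewrite ?inE.
Qed.

Lemma pt_Pts (v : vec) : v != 0 -> pt v \in Pts F.
Proof. by move=> nv; apply/PtsP; exists v. Qed.

Lemma gmap_pt (A : 'M[F]_3) (v : vec) : v != 0 -> gmap A (pt v) = pt (v *m A).
Proof. by move=> nv; rewrite /gmap ffunE pt_Pts // img_pt. Qed.

Lemma eigfree_unit (T : 'M[F]_3) : eigfree T -> T \in unitmx.
Proof.
move/forallP/(_ 0); rewrite unitmxE unitfE (_ : 0%:M = 0) ?subr0 //.
by apply/matrixP => i j; rewrite !mxE mul0rn.
Qed.

Lemma eigvec (T : 'M[F]_3) (v : vec) l : v != 0 -> v *m T = l *: v -> ~~ eigfree T.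
Proof.
move=> nv e; apply/forallPn; exists l; rewrite negbK; apply/det0P; exists v => //.
by rewrite mulmxBr mul_mx_scalar e subrr.
Qed.

Lemma not_eigfree (T : 'M[F]_3) : ~~ eigfree T -> exists (v : vec) (l : F), v != 0 /\ v *m T = l *: v.
Proof.
case/forallPn => l; rewrite negbK => /det0P [v nv e]; exists v, l; split => //.
by apply/eqP; rewrite -subr_eq0 -mul_mx_scalar -mulmxBr e.
Qed.

Lemma fpf_gmap (A : 'M[F]_3) : A \in unitmx -> fpf (gmap A) = eigfree A.
Proof.
move=> uA; apply/forallP/idP => [h|h p].
  apply/negPn/negP => /not_eigfree [v [l [nv e]]].
  have := h (pt v); rewrite pt_Pts //= gmap_pt // e.
  have nl : l != 0.
    apply/negP => /eqP l0; move: e; rewrite l0 scale0r => e0.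
    have := congr1 (mulmx^~ (invmx A)) e0; rewrite /= mulmxK // mul0mx => v0.
    by rewrite v0 eqxx in nv.
  by rewrite (ptZ v nl) eqxx.
apply/implyP => /PtsP [v nv ->]; rewrite gmap_pt //; apply/negP => /eqP e.
have [c ec] := pt_eq e.
by move: (eigvec nv ec); rewrite h.
Qed.

End G1.

Section G2.
Variable F : finFieldType.
Local Notation q := #|F|.
Local Notation vec := 'rV[F]_3.

Lemma span2E (u w x : vec) : (x \in span2 u w) = (x <= col_mx u w)%MS.
Proof.
apply/imset2P/submxP.
  case=> a b _ _ ->; exists (row_mx a%:M b%:M).
  by rewrite mul_row_col !mul_scalar_mx.
case=> D ->; exists (lsubmx D 0 0) (rsubmx D 0 0) => //.
by rewrite -[D]hsubmxK mul_row_col row_mxKl row_mxKr {1}[lsubmx D]mx11_scalar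
   {1}[rsubmx D]mx11_scalar !mul_scalar_mx.
Qed.

Lemma pt_line (u w v : vec) : v != 0 -> (pt v \in line u w) = (v <= col_mx u w)%MS.
Proof.
move=> nv; rewrite /line inE pt_Pts //=; apply/subsetP/idP => [h|h x].
  by rewrite -span2E; apply: h; exact: pt_self.
by case/ptP => c ->; rewrite span2E scalemx_sub.
Qed.

Lemma rank1_eq m (S : 'M[F]_(m, 3)) (s v : vec) :
  \rank S = 1%N -> s != 0 -> (s <= S)%MS -> (v <= S)%MS -> exists c, v = c *: s.
Proof.
move=> rS ns sS vS; apply/sub_rVP.
have e := (mxrank_leqif_eq sS).2.
have : (s == S)%MS by rewrite -e rank_rV ns rS.
case/andP => _ Ss; exact: submx_trans vS Ss.
Qed.

Lemma exists_nz m (S : 'M[F]_(m, 3)) : (0 < \rank S)%N -> exists2 s : vec, s != 0 & (s <= S)%MS.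
Proof.
rewrite lt0n mxrank_eq0 => nS.
have [i ni] : exists i, row i S != 0.
  apply/existsP; apply: contraR nS; rewrite negb_exists => /forallP h.
  by apply/eqP/row_matrixP => i; rewrite row0; apply/eqP; move: (h i); rewrite negbK.
by exists (row i S) => //; exact: row_sub.
Qed.

Lemma eigfree_tr (A : 'M[F]_3) : eigfree A^T = eigfree A.
Proof.
apply/forallP/forallP => h l; move: (h l);
  by rewrite -det_tr linearB /= tr_scalar_mx ?trmxK.
Qed.

Lemma invariant_plane (U : 'M[F]_(2, 3)) (A : 'M[F]_3) :
  \rank U = 2%N -> (U *m A <= U)%MS -> ~~ eigfree A.
Proof.
move=> rU sUA.
set K := kermx U^T.
have rK : \rank K = 1%N by rewrite mxrank_ker mxrank_tr rU.
have [n nn nK] := exists_nz (ltac:(by rewrite rK) : (0 < \rank K)%N).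
have nUT : n *m U^T = 0 by apply/sub_kermxP.
have [D eD] := submxP sUA.
have : (n *m A^T <= K)%MS.
  apply/sub_kermxP; rewrite -mulmxA -trmx_mul eD trmx_mul mulmxA nUT mul0mx //.
case/(rank1_eq rK nn nK) => l el.
by rewrite -eigfree_tr; apply: (eigvec nn el).
Qed.



Lemma mul_nz (v : vec) (A : 'M[F]_3) : A \in unitmx -> v != 0 -> v *m A != 0.
Proof.
move=> uA; apply: contra => /eqP e.
by have := congr1 (mulmx^~ (invmx A)) e; rewrite /= mulmxK // mul0mx => ->.
Qed.

Lemma line_fix (l : {set {set vec}}) (A : 'M[F]_3) :
  l \in Lines F -> eigfree A -> #|[set c in l | gmap A c \in l]| = 1%N.
Proof.
rewrite inE => /existsP [u /existsP [w /andP [/eqP rU /eqP ->]]] hA.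
have uA := eigfree_unit hA.
set U := col_mx u w in rU *.
set S := (U :&: U *m invmx A)%MS.
have rUi : \rank (U *m invmx A) = 2%N.
  by rewrite mxrankMfree // row_free_unit unitmx_inv.
have rS : \rank S = 1%N.
  have h1 := mxrank_sum_cap U (U *m invmx A).
  have h2 := rank_leq_col (U + U *m invmx A)%MS.
  have h3 : (\rank S <= 2)%N by apply: leq_trans (mxrankS (capmxSl _ _)) _; rewrite rU.
  case: (ltngtP (\rank S) 1) => // [|h4].
    rewrite -/S in h1; rewrite ltnS leqn0 => /eqP h0; rewrite h0 rU rUi in h1; lia.
  have hS2 : \rank S = 2%N by lia.
  have e1 := (mxrank_leqif_eq (capmxSl U (U *m invmx A))).2.
  have e2 := (mxrank_leqif_eq (capmxSr U (U *m invmx A))).2.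
  rewrite -/S hS2 rU eqxx in e1; rewrite -/S hS2 rUi eqxx in e2.
  move/esym: e1 => /andP [_ US]; move/esym: e2 => /andP [SUi _].
  have : (U *m A <= U)%MS.
    have := submxMr A (submx_trans US SUi); by rewrite mulmxKV.
  by move/(invariant_plane rU); rewrite hA.
have [s ns sS] := exists_nz (ltac:(by rewrite rS) : (0 < \rank S)%N).
move: (sS); rewrite sub_capmx => /andP [sU sUi].
have sAU : (s *m A <= U)%MS by have := submxMr A sUi; rewrite mulmxKV.
suff -> : [set c in line u w | gmap A c \in line u w] = [set pt s] by rewrite cards1.
apply/setP => c; rewrite !inE; apply/idP/idP.
  case/and3P => /andP [/PtsP [v nv ec] csub] gP gsub.
  have cl : c \in line u w by rewrite /line inE csub andbT; apply/PtsP; exists v.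
  have gl : gmap A c \in line u w by rewrite /line inE gP gsub.
  subst c; rewrite gmap_pt // pt_line ?mul_nz // in gl; rewrite pt_line // in cl.
  have vS : (v <= S)%MS.
    rewrite sub_capmx cl /=; have := submxMr (invmx A) gl; by rewrite mulmxK.
  have [k ek] := rank1_eq rS ns sS vS.
  have nk : k != 0 by apply: contra nv; rewrite ek => /eqP ->; rewrite scale0r.
  by rewrite ek ptZ.
move/eqP ->.
have : pt s \in line u w by rewrite pt_line.
have : gmap A (pt s) \in line u w by rewrite gmap_pt // pt_line ?mul_nz.
by rewrite /line !inE => /andP [-> ->] /andP [-> ->].
Qed.

End G2.

Section G3.
Variable F : finFieldType.
Local Notation q := #|F|.
Local Notation vec := 'rV[F]_3.

Lemma scalar_of (M : 'M[F]_3) : (forall v : vec, exists c, v *m M = c *: v) -> M = (M 0 0)%:M.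
Proof.
move=> h.
have off i j : i != j -> M i j = 0.
  move=> nij; have [c e] := h (delta_mx 0 i).
  move: (congr1 (fun r : vec => r 0 j) e); rewrite -rowE !mxE /= => ->.
  by rewrite eq_sym (negbTE nij) mulr0.
have diag i j : M i i = M j j.
  case: (eqVneq i j) => [->//|nij].
  have [c e] := h (delta_mx 0 i + delta_mx 0 j).
  have ei := congr1 (fun r : vec => r 0 i) e; have ej := congr1 (fun r : vec => r 0 j) e.
  move: ei ej; rewrite /= mulmxDl -!rowE !mxE /= !eqxx (off j i) 1?eq_sym // (off i j) //.
  have nji : (j == i) = false by rewrite eq_sym (negbTE nij).
  by rewrite nji addr0 add0r addr0 add0r mulr1 => -> ->.
apply/matrixP => i j; rewrite mxE; case: (eqVneq i j) => [->|nij].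
  by rewrite mulr1n; apply: diag.
by rewrite off // mulr0n.
Qed.

Lemma gmapZ (c : F) (A : 'M[F]_3) : c != 0 -> gmap (c *: A) = gmap A.
Proof.
move=> nc; apply/ffunP => S; rewrite !ffunE; case: ifP => // /PtsP [v nv ->].
by rewrite !img_pt -scalemxAr ptZ.
Qed.

Lemma countB (x0 y0 : vec) : x0 != 0 -> y0 != 0 ->
  #|[set g in PGL3 F | (g (pt x0) == pt y0) && fpf g]|
  = #|[set A : 'M[F]_3 | (x0 *m A == y0) && eigfree A]|.
Proof.
move=> nx ny.
set SA := [set A : 'M[F]_3 | (x0 *m A == y0) && eigfree A].
have -> : [set g in PGL3 F | (g (pt x0) == pt y0) && fpf g] = (@gmap F) @: SA.
  apply/setP => g; rewrite inE; apply/idP/imsetP.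
    case/andP => /imsetP [A uA ->] /andP [/eqP ha hf].
    rewrite gmap_pt // in ha; have [c ec] := pt_eq ha.
    have nc : c != 0.
      by apply/negP => /eqP c0; move: (mul_nz uA nx); rewrite ec c0 scale0r eqxx.
    exists (c^-1 *: A); last by rewrite gmapZ // invr_eq0.
    rewrite inE -scalemxAr ec scalerA mulVf // scale1r eqxx /=.
    by rewrite -fpf_gmap ?unitmxZ ?unitfE ?invr_eq0 // gmapZ ?invr_eq0 // hf.
  case=> A; rewrite inE => /andP [/eqP hx hA] ->.
  rewrite gmap_pt // hx eqxx fpf_gmap ?eigfree_unit // hA andbT.
  by rewrite andbT /PGL3; apply/imsetP; exists A => //; exact: eigfree_unit.
rewrite card_in_imset // => A B; rewrite !inE => /andP [/eqP hA eA] /andP [/eqP hB eB] e.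
have uA := eigfree_unit eA; have uB := eigfree_unit eB.
have h : forall v : vec, exists c, v *m (A *m invmx B) = c *: v.
  move=> v; case: (eqVneq v 0) => [->|nv]; first by exists 0; rewrite mul0mx scale0r.
  have := congr1 (fun g : {ffun _ -> _} => g (pt v)) e; rewrite /= !gmap_pt // => /pt_eq [c ec].
  by exists c; rewrite mulmxA ec -scalemxAl mulmxK.
have eM := scalar_of h.
set k := (A *m invmx B) 0 0 in eM.
have eAB : A = k *: B by rewrite -[A](mulmxKV uB) eM mul_scalar_mx.
have : y0 = k *: y0 by rewrite -{1}hA eAB -scalemxAr hB.
move/eqP; rewrite -subr_eq0 -{1}[y0]scale1r -scalerBl scaler_eq0 (negbTE ny) orbF subr_eq0.
by move=> /eqP k1; rewrite eAB -k1 scale1r.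
Qed.

End G3.

Section G4.
Variable F : finFieldType.
Local Notation q := #|F|.
Local Notation vec := 'rV[F]_3.

Lemma eigfree_conj (B A : 'M[F]_3) : B \in unitmx -> eigfree (B *m A *m invmx B) = eigfree A.
Proof.
move=> uB; apply/forallP/forallP => h l; move: (h l).
  have -> : B *m A *m invmx B - l%:M = B *m (A - l%:M) *m invmx B.
    by rewrite mulmxBr mulmxBl mul_mx_scalar -scalemxAl mulmxV // scalemx1.
  rewrite !det_mulmx det_inv.
  have nB : \det B != 0 by rewrite -unitfE -unitmxE.
  by apply: contra => /eqP ->; rewrite mulr0 mul0r.
have -> : B *m A *m invmx B - l%:M = B *m (A - l%:M) *m invmx B.
  by rewrite mulmxBr mulmxBl mul_mx_scalar -scalemxAl mulmxV // scalemx1.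
rewrite !det_mulmx det_inv.
have nB : \det B != 0 by rewrite -unitfE -unitmxE.
by move=> h2; rewrite mulrAC mulfV // mul1r.
Qed.

Lemma countC1 (x0 y0 : vec) (B : 'M[F]_3) : B \in unitmx ->
  (delta_mx 0 0 : vec) *m B = x0 -> (delta_mx 0 1 : vec) *m B = y0 ->
  #|[set A : 'M[F]_3 | (x0 *m A == y0) && eigfree A]|
  = #|[set T : 'M[F]_3 | ((delta_mx 0 0 : vec) *m T == (delta_mx 0 1 : vec)) && eigfree T]|.
Proof.
move=> uB hx hy.
have kinj : injective (fun A : 'M[F]_3 => B *m A *m invmx B).
  move=> A1 A2 /= e.
  have := congr1 (fun M => invmx B *m M *m B) e.
  by rewrite /= !mulmxA !mulVmx // !mul1mx !mulmxKV.
rewrite -(card_imset _ kinj); apply: eq_card => T; rewrite [in RHS]inE.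
apply/imsetP/idP.
  case=> A; rewrite inE => /andP [/eqP hA eA] ->.
  rewrite eigfree_conj // eA andbT !mulmxA hx hA -hy mulmxK //.
case/andP => /eqP hT eT; exists (invmx B *m T *m B).
  rewrite inE -hx !mulmxA mulmxK // hT hy eqxx /=.
  by rewrite -{2}(invmxK B) eigfree_conj // unitmx_inv.
by rewrite !mulmxA mulmxV // mul1mx mulmxK.
Qed.

Lemma basis_ext (x0 y0 : vec) : x0 != 0 -> y0 != 0 -> pt x0 != pt y0 ->
  exists B : 'M[F]_3, [/\ B \in unitmx, (delta_mx 0 0 : vec) *m B = x0
                        & (delta_mx 0 1 : vec) *m B = y0].
Proof.
move=> nx ny nxy.
set U := col_mx x0 y0.
have rc : \rank (x0 :&: y0)%MS = 0%N.
  apply/eqP; rewrite -leqn0 leqNgt; apply/negP => /exists_nz [s ns].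
  rewrite sub_capmx => /andP [/sub_rVP [a ea] /sub_rVP [b eb]].
  have na : a != 0 by apply: contra ns; rewrite ea => /eqP ->; rewrite scale0r.
  have nb : b != 0 by apply: contra ns; rewrite eb => /eqP ->; rewrite scale0r.
  by move: nxy; rewrite -(ptZ x0 na) -(ptZ y0 nb) -ea -eb eqxx.
have rU : \rank U = 2%N.
  rewrite /U -(addsmxE x0 y0).
  have := mxrank_sum_cap x0 y0; rewrite rc !rank_rV nx ny addn0 => ->.
  by [].
have [z nz zC] : exists2 z : vec, z != 0 & (z <= U^C)%MS.
  by apply: exists_nz; rewrite mxrank_compl rU.
pose B := \matrix_(i < 3, j < 3)
  (if (i : nat) == 0%N then x0 0 j else if (i : nat) == 1%N then y0 0 j else z 0 j).
have r0 : row 0 B = x0 by apply/rowP => j; rewrite !mxE.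
have r1 : row 1 B = y0 by apply/rowP => j; rewrite !mxE.
have r2 : row 2 B = z by apply/rowP => j; rewrite !mxE.
have UB : (U <= B)%MS by rewrite col_mx_sub -{1}r0 -{1}r1 !row_sub.
have zB : (z <= B)%MS by rewrite -{1}r2 row_sub.
have rUz : \rank (U + z)%MS = 3%N.
  have := mxrank_sum_cap U z.
  have -> : \rank (U :&: z)%MS = 0%N.
    have : (U :&: z <= U :&: U^C)%MS by apply: capmxS.
    by rewrite capmx_compl submx0 => /eqP ->; rewrite mxrank0.
  by rewrite rU rank_rV nz addn0 => ->.
have rB : \rank B = 3%N.
  apply/eqP; rewrite eqn_leq rank_leq_row /= -{1}rUz mxrankS //.
  by rewrite addsmx_sub UB zB.
exists B; split.
- by rewrite -row_free_unit /row_free rB.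
- by rewrite -rowE r0.
- by rewrite -rowE r1.
Qed.

End G4.

End Aux.
Import Aux.
Import GRing.Theory.

Lemma card_in_sum (T : finType) (A : {set T}) (P : pred T) :
  #|[set x in A | P x]| = \sum_(x in A) (P x : nat).
Proof.
rewrite -sum_in [RHS]big_mkcond; apply: eq_bigr => x _; rewrite inE.
by case: (x \in A).
Qed.

Lemma sum_eq_in (T : finType) (A : {set T}) (y : T) :
  \sum_(x in A) ((y == x) : nat) = (y \in A).
Proof.
rewrite big_mkcond (bigD1 y) //= eqxx big1 ?addn0 => [|x nx]; first by case: (y \in A).
by rewrite eq_sym (negbTE nx); case: (x \in A).
Qed.

Theorem mainTheorem10 (F : finFieldType) (l : {set {set 'rV[F]_3}}) :
  l \in Lines F ->
  forall a b : {set 'rV[F]_3}, a \in Pts F -> b \in Pts F ->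
    \sum_(c in l) \sum_(d in l) Nmat a b c d
    = (#|F| ^ 2 * vnum #|F|) * (a != b).
Proof.
move=> hl a b ha hb.
have step1 : \sum_(c in l) \sum_(d in l) Nmat a b c d
             = #|[set g in PGL3 F | (g a == b) && fpf g]|.
  rewrite /Nmat.
  under eq_bigr do under eq_bigr do rewrite card_in_sum.
  under eq_bigr do rewrite exchange_big.
  rewrite exchange_big card_in_sum; apply: eq_bigr => g gG.
  case E: ((g a == b) && fpf g).
    case/imsetP: gG => A uA eg.
    case/andP: E => Ea Ef.
    have hA : eigfree A by rewrite -fpf_gmap // -eg.
    transitivity (\sum_(c in l) \sum_(d in l) ((g c == d) : nat)).
      apply: eq_bigr => c _; apply: eq_bigr => d _; by rewrite Ea Ef andbT.
    rewrite (eq_bigr (fun c => (g c \in l) : nat)); last by move=> c _; rewrite sum_eq_in.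
    by rewrite -card_in_sum eg line_fix.
  rewrite big1 // => c _; rewrite big1 // => d _; move: E.
  by case: (g a == b); case: (fpf g); rewrite ?andbF.
rewrite step1.
case: (eqVneq a b) => [<-|nab].
  rewrite muln0; apply/eqP; rewrite cards_eq0; apply/eqP/setP => g; rewrite !inE.
  apply/negbTE; apply/negP => /andP [_ /andP [/eqP ga /forallP /(_ a)]].
  by rewrite ha ga eqxx.
rewrite muln1.
case/PtsP: ha => x0 nx ea; case/PtsP: hb => y0 ny eb.
have nxy : pt x0 != pt y0 by rewrite -ea -eb.
rewrite ea eb countB //.
have [B [uB hx hy]] := basis_ext nx ny nxy.
rewrite (countC1 uB hx hy) S0count.
have R3 := Rcount F.
set R := #|_| in R3 *.
set q := #|F| in R3 *.
have e : ((q - 1) * q * (q ^ 2 - 1) = 3 * ((q - 1) * R))%N.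
  by rewrite -mulnA mulnBr muln1 -expnS -R3 mulnCA.
rewrite /vnum e mulKn //.
rewrite expnS expn1. nia.
Qed.
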